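(* Let $N\ge 2$ and $n,m\ge 1$. Let $\{\mathcal{G}_k : k\in\mathcal{P}\}$, $\mathcal{P}=\{1,\ldots,Q\}$, be a finite family of undirected weighted graphs on the node set $\{1,\ldots,N\}$ with weights $a^k_{ij}=a^k_{ji}\ge 0$, $a^k_{ii}=0$. Let $\sigma:[0,\infty)\to\mathcal{P}$ be a right-continuous, piecewise constant switching signal whose consecutive switching instants are separated by at least a dwell time $T_{\min}>0$. Assume: (i) there exists $T>0$ such that for every $t_0\ge 0$ the union graph $\bigcup_{t\in[t_0,t_0+T)}\mathcal{G}_{\sigma(t)}$ contains a directed spanning tree (equivalently, since the graphs are undirected, is connected); (ii) $A\in\mathbb{R}^{n\times n}$, $B\in\mathbb{R}^{n\times m}$ and the pair $(A,B)$ is stabilizable; (iii) there exists a symmetric positive definite matrix $P\in\mathbb{R}^{n\times n}$ such that $A^{\mathrm{T}}P+PA\le 0$ and the pair $(B^{\mathrm{T}}P,A)$ is observable. Let $\phi>0$ and $K=B^{\mathrm{T}}P$, and consider $$\dot{x}_i=Ax_i+\phi BK\sum_{j=1}^N a_{ij}^{\sigma(t)}(x_j-x_i),\qquad i=1,\ldots,N,\ x_i\in\mathbb{R}^n.$$ Then synchronization is achieved: for every initial condition, $\lim_{t\to\infty}\|x_i(t)-x_j(t)\|=0$ for all $i,j\in\{1,\ldots,N\}$.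
   Context: For a weighted digraph with weights $a_{ij}\ge0$, $a_{ij}>0$ means that $(j,i)$ is an edge (information flows from $j$ to $i$). A directed path is a sequence of edges $(i_1,i_2),(i_2,i_3),\ldots,(i_{q-1},i_q)$. A digraph contains a directed spanning tree if some node has a directed path to every other node. The union of a family of graphs on the same node set has as edge set the union of their edge sets. An undirected graph is one with symmetric weights $a_{ij}=a_{ji}$; each undirected edge counts as edges in both directions. *)

(* Defs.v *)
From HB Require Import structures.
From mathcomp Require Import all_boot all_order all_algebra.
From mathcomp Require Import all_classical all_reals all_analysis.
From mathcomp Require complex.
Import complex.ComplexField.
From Stdlib Require Import Relations.
Set Implicit Arguments. Unset Strict Implicit. Unset Printing Implicit Defensive.
Import Order.TTheory GRing.Theory Num.Theory.
Import numFieldNormedType.Exports.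
Local Open Scope classical_set_scope.
Local Open Scope ring_scope.

Definition complexify (R : rcfType) (n : nat) (M : 'M[R]_n) : 'M[complex.complex R]_n :=
  map_mx (@complex.real_complex_def R (Phant R)) M.

Definition hurwitz (R : rcfType) (n : nat) (M : 'M[R]_n) : Prop :=
  forall lam : complex.complex R, eigenvalue (complexify M) lam ->
    complex.Re lam < 0.

Definition stabilizable (R : rcfType) (n m : nat) (A : 'M[R]_n) (B : 'M[R]_(n, m)) : Prop :=
  exists F : 'M[R]_(m, n), hurwitz (A + B *m F).

Definition obs_mx (R : fieldType) (p n : nat) (C : 'M[R]_(p, n)) (A : 'M[R]_n) :=
  \mxcol_(k < n) (C *m A ^+ k).

Definition observable (R : fieldType) (p n : nat) (C : 'M[R]_(p, n)) (A : 'M[R]_n) : Prop :=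
  \rank (obs_mx C A) = n.

Definition qform (R : ringType) (n : nat) (M : 'M[R]_n) (v : 'cV[R]_n) : R :=
  (v^T *m M *m v) 0 0.

Definition sym_posdef (R : numDomainType) (n : nat) (P : 'M[R]_n) : Prop :=
  P^T = P /\ forall v : 'cV[R]_n, v != 0 -> 0 < qform P v.

(* M <= 0 in the sense of quadratic forms (M is symmetric in our use) *)
Definition neg_semidef (R : numDomainType) (n : nat) (M : 'M[R]_n) : Prop :=
  forall v : 'cV[R]_n, qform M v <= 0.

Definition undirected_weights (R : numDomainType) (N : nat) (a : 'M[R]_N) : Prop :=
  (forall i j, a i j = a j i) /\ (forall i j, 0 <= a i j) /\ (forall i, a i i = 0).

(* Edge (j,i) of the union graph of G_{sigma(t)}, t in [t0, t0+T):
   a_{ij}^{sigma(t)} > 0 for some such t. *)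
Definition union_edge (R : realType) (N Q : nat) (a : 'I_Q -> 'M[R]_N)
  (sigma : R -> 'I_Q) (t0 T : R) (j i : 'I_N) : Prop :=
  exists t : R, t0 <= t < t0 + T /\ 0 < a (sigma t) i j.

(* A digraph with edge relation E (E j i: edge from j to i) contains a directed
   spanning tree: some root has a directed path to every other node. *)
Definition has_spanning_tree (N : nat) (E : 'I_N -> 'I_N -> Prop) : Prop :=
  exists r : 'I_N, forall i : 'I_N, i <> r -> clos_trans _ E r i.

(* sigma : [0,oo) -> P is piecewise constant, right-continuous, with dwell time
   Tmin: switching instants 0 = s 0 < s 1 < ... with s (k+1) - s k >= Tmin and
   sigma constant on each [s k, s (k+1)). *)
Definition dwell_switching (R : realType) (Q : nat) (sigma : R -> 'I_Q) (Tmin : R) : Prop :=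
  0 < Tmin /\
  exists s : nat -> R, s 0%N = 0 /\ (forall k, s k + Tmin <= s k.+1) /\
    (forall k t, s k <= t < s k.+1 -> sigma t = sigma (s k)).

Definition has_right_deriv (R : realType) (V : normedModType R) (f : R -> V) (t : R) (v : V) : Prop :=
  (fun h : R => h^-1 *: (f (t + h) - f t)) @ (0 : R)^'+ --> v.

(* x solves the switched network dynamics on [0,oo): continuous for t > 0 and
   right-continuous at 0, with right derivative (which by right-continuity of
   sigma is the natural notion of solution) equal to the vector field at every t >= 0. *)
Definition network_solution (R : realType) (N Q n m : nat) (A : 'M[R]_n) (B : 'M[R]_(n, m))
  (K : 'M[R]_(m, n)) (phi : R) (a : 'I_Q -> 'M[R]_N) (sigma : R -> 'I_Q)
  (x : 'I_N -> R -> 'cV[R]_n) : Prop :=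
  forall i : 'I_N,
    (forall t : R, 0 < t -> {for t, continuous (x i)}) /\
    (forall t : R, 0 <= t ->
       has_right_deriv (x i) t
         (A *m x i t + phi *: (B *m K *m \sum_(j < N) a (sigma t) i j *: (x j t - x i t)))).

(* Main.v *)
Require Import Defs.
From HB Require Import structures.
From mathcomp Require Import all_boot all_order all_algebra.
From mathcomp Require Import all_classical all_reals all_analysis.
From Stdlib Require Import Relations.
From mathcomp Require Import ring lra zify.
From Stdlib Require Import Lia.
Import Order.TTheory GRing.Theory Num.Theory.
Import numFieldNormedType.Exports.
Local Open Scope classical_set_scope.
Local Open Scope ring_scope.
Set Implicit Arguments. Unset Strict Implicit. Unset Printing Implicit Defensive.
Section RD.
Variable R : realType.
Implicit Types (f g : R -> R) (t a b c v w : R).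

Definition rd f t v := @has_right_deriv R R^o f t v.

Lemma near_right_delta (P : R -> Prop) x :
  (\forall h \near x^'+, P h) -> exists2 d, 0 < d & forall h, x < h < x + d -> P h.
Proof.
rewrite near_withinE => /nbhs_ballP [e e0 He]; exists e => // h /andP[xh hxe].
apply: He => //; rewrite /ball /= ltr_distlC; apply/andP; split => //.
by rewrite ltrBlDr (lt_le_trans xh) // lerDl ltW.
Qed.

Lemma rd_cst c t : rd (fun=> c) t 0.
Proof.
rewrite /rd /has_right_deriv.
have -> : (fun h : R => h^-1 *: (c - c)) = fun=> (0:R^o).
  by apply/funext => h; rewrite subrr scaler0.
exact: cvg_cst.
Qed.

Lemma rdD f g t a b : rd f t a -> rd g t b -> rd (f \+ g) t (a + b).
Proof.
rewrite /rd /has_right_deriv => Hf Hg.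
have -> : (fun h : R => h^-1 *: ((f \+ g) (t + h) - (f \+ g) t)) =
  (fun h => h^-1 *: (f (t + h) - f t) + h^-1 *: (g (t + h) - g t)).
  by apply/funext => h /=; rewrite -scalerDr addrACA opprD.
exact: cvgD.
Qed.

Lemma rdZ f t a c : rd f t a -> rd (fun s => c * f s) t (c * a).
Proof.
rewrite /rd /has_right_deriv => Hf.
have -> : (fun h : R => h^-1 *: (c * f (t + h) - c * f t)) =
  (fun h => c * (h^-1 *: (f (t + h) - f t))).
  by apply/funext => h /=; rewrite /GRing.scale /= -mulrBr mulrCA.
exact: cvgMl_tmp.
Qed.

Lemma rdN f t a : rd f t a -> rd (fun s => - f s) t (- a).
Proof.
move=> H; have := rdZ (c:=-1) H; rewrite mulN1r.
by have -> : (fun s => -1 * f s) = (fun s => - f s) by apply/funext=> s; rewrite mulN1r.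
Qed.

Lemma rdB f g t a b : rd f t a -> rd g t b -> rd (f \- g) t (a - b).
Proof. move=> Hf /rdN Hg; have := rdD Hf Hg; congr rd. Qed.

Lemma rd_sum (I : Type) (r : seq I) (Pr : pred I) (F : I -> R -> R) (V : I -> R) t :
  (forall i, Pr i -> rd (F i) t (V i)) ->
  rd (fun s => \sum_(i <- r | Pr i) F i s) t (\sum_(i <- r | Pr i) V i).
Proof.
move=> H; elim: r => [|i r IH].
  have -> : (fun s => \sum_(i <- [::] | Pr i) F i s) = fun=> 0.
    by apply/funext => s; rewrite big_nil.
  by rewrite big_nil; exact: rd_cst.
have -> : (fun s => \sum_(j <- i :: r | Pr j) F j s) =
   (fun s => (if Pr i then F i s else 0) + \sum_(j <- r | Pr j) F j s).
  by apply/funext => s; rewrite big_cons; case: (Pr i); rewrite ?add0r.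
rewrite big_cons; case: ifP => Pi.
  exact: (rdD (H i Pi) IH).
by rewrite -[X in rd _ _ X]add0r; exact: (rdD (rd_cst 0 t) IH).
Qed.

Lemma rd_rcont f t a : rd f t a -> f (t + h) @[h --> 0^'+] --> f t.
Proof.
rewrite /rd /has_right_deriv => Hf.
have e : (fun h => f (t + h)) = (fun h => h * (h^-1 *: (f (t + h) - f t)) + f t).
  apply/funext => h /=; have [->|h0] := eqVneq h 0.
    by rewrite mul0r add0r addr0.
  by rewrite /GRing.scale /= mulrA mulfV // mul1r subrK.
rewrite e -[X in _ --> X]add0r; apply: cvgD; last exact: cvg_cst.
rewrite -[X in _ --> X](mul0r a); apply: cvgM => //.
apply: cvg_at_right_filter; exact: cvg_id.
Qed.

Lemma rdM f g t a b : rd f t a -> rd g t b -> rd (f \* g) t (a * g t + f t * b).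
Proof.
move=> Hf Hg; have Cf := rd_rcont Hf.
move: Hf Hg; rewrite /rd /has_right_deriv => Hf Hg.
have -> : (fun h : R => h^-1 *: ((f \* g) (t + h) - (f \* g) t)) =
  (fun h => (h^-1 *: (f (t + h) - f t)) * g t + f (t + h) * (h^-1 *: (g (t + h) - g t))).
  apply/funext => h /=; rewrite /GRing.scale /=.
  ring.
apply: cvgD; first exact: cvgMr_tmp.
exact: cvgM.
Qed.

End RD.

Section MVI.
Variable R : realType.
Implicit Types (f g : R -> R) (t a b c v w : R).

Lemma near_ex3 (F : set_system R) (FF : ProperFilter F) (P1 P2 P3 : R -> Prop) :
  (\forall u \near F, P1 u) -> (\forall u \near F, P2 u) -> (\forall u \near F, P3 u) ->
  exists u, [/\ P1 u, P2 u & P3 u].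
Proof.
move=> h1 h2 h3; have [u [[? ?] ?]] := filter_ex (filterI (filterI h1 h2) h3).
by exists u.
Qed.

Lemma mvi_aux f a b M e : a <= b -> 0 < e ->
  (forall t, a < t <= b -> {for t, continuous f}) ->
  (forall t, a <= t < b -> exists2 v, rd f t v & v <= M) ->
  f b - f a - (M + e) * (b - a) <= e.
Proof.
move=> hab e0 Hc Hd.
pose G u := f u - f a - (M + e) * (u - a).
pose S := [set s | a <= s <= b /\ forall u, a <= u <= s -> G u <= e].
have Sa : S a.
  split; first by rewrite lexx hab.
  move=> u /andP[h1 h2]; have -> : u = a by apply/eqP; rewrite eq_le h1 h2.
  by rewrite /G !subrr mulr0 subr0 ltW.
have hS : has_sup S.
  split; first by exists a.
  by exists b => s [/andP[_ ->]].
pose c := sup S.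
have hac : a <= c := sup_upper_bound hS Sa.
have hcb : c <= b.
  by apply: ge_sup; [exists a | move=> s [/andP[_ ->]]].
have claim1 : forall u, a <= u < c -> G u <= e.
  move=> u /andP[au uc].
  have cu0 : 0 < c - u by rewrite subr_gt0.
  have [s [_ Hs] us] := sup_adherent cu0 hS.
  apply: Hs; rewrite au /=; move: us; rewrite /c; lra.
have claim2 : G c <= e.
  have [ca|ac] := eqVneq c a; first by rewrite ca; case: Sa => _; apply; rewrite lexx.
  have ac' : a < c by rewrite lt_neqAle eq_sym ac hac.
  rewrite leNgt; apply/negP => Gc.
  have HG : G u @[u --> c^'-] --> G c.
    apply: cvg_at_left_filter.
    apply: cvgB; first by apply: cvgB; [apply: (Hc c); by rewrite ac' hcb | exact: cvg_cst].
    apply: cvgMl_tmp; apply: cvgB; [exact: cvg_id | exact: cvg_cst].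
  have H1 : \forall u \near c^'-, e < G u by apply: (cvgr_gt _ HG).

  have H2 := nbhs_left_gt ac'.
  have H3 := nbhs_left_lt c.
  have [u [Hu1 Hu2 Hu3]] := near_ex3 (at_left_proper_filter c) H1 H2 H3.
  by have := claim1 u; rewrite (ltW Hu2) Hu3 /= => /(_ isT); rewrite leNgt Hu1.
have claim3 : c = b.
  apply/eqP; rewrite eq_le hcb /=; rewrite leNgt; apply/negP => cb.
  have [v Hv vM] := Hd c ltac:(by rewrite hac cb).
  have ve : v < v + e by rewrite ltrDl.
  have bc0 : 0 < b - c by rewrite subr_gt0.
  have H1 : \forall h \near 0^'+, h^-1 *: (f (c + h) - f c) < v + e by apply: (cvgr_lt _ Hv).
  have H2 := nbhs_right_lt bc0.
  have [d d0 Hdd] := near_right_delta (filterI H1 H2).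
  have Sc : S (c + d / 2).
    split.
      apply/andP; split; first by move: hac; have := d0; lra.
      have [_ h2] := Hdd (d / 2) ltac:(by apply/andP; split; move: d0; lra).
      by move: h2; lra.
    move=> u /andP[au ucd].
    have [uc|cu] := ltP u c; first by apply: claim1; rewrite au uc.
    have [uc'|cu'] := eqVneq u c; first by rewrite uc'.
    have cu2 : c < u by rewrite lt_neqAle eq_sym cu' cu.
    have [h1 _] := Hdd (u - c) ltac:(by apply/andP; split; move: cu2 ucd d0; lra).
    move: h1 claim2; rewrite /G /GRing.scale /= (addrC c) subrK => h1 h2.
    have hp : 0 < u - c by move: cu2; lra.
    have eq1 : f u - f c = (u - c) * ((u - c)^-1 * (f u - f c)).
      by rewrite mulrA mulfV ?mul1r // gt_eqF.
    move: h1 eq1; set y := (u - c)^-1 * (f u - f c) => h1 eq1.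
    have : (u - c) * y < (u - c) * (v + e) by rewrite ltr_pM2l.
    move: h2 vM hp eq1; nra.
  have := sup_upper_bound hS Sc; rewrite -/c; move: d0; lra.
by move: claim2; rewrite claim3.
Qed.

Lemma mvi f a b M : a <= b ->
  (forall t, a < t <= b -> {for t, continuous f}) ->
  (forall t, a <= t < b -> exists2 v, rd f t v & v <= M) ->
  f b - f a <= M * (b - a).
Proof.
move=> hab Hc Hd; apply/ler_addgt0Pr => e e0.
have k0 : 0 < b - a + 1 by move: hab; lra.
have := mvi_aux (e := e / (b - a + 1)) hab (divr_gt0 e0 k0) Hc Hd.
have : e / (b - a + 1) * (b - a + 1) = e by rewrite mulfVK // gt_eqF.
move: hab; nra.
Qed.

End MVI.

Section Vec.
Variable R : realType.

Definition dot p (u v : 'cV[R]_p) : R := (u^T *m v) 0 0.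
Definition nrm p q (M : 'M[R]_(p, q)) : R := \sum_i \sum_j `|M i j|.

Lemma dotE p (u v : 'cV[R]_p) : dot u v = \sum_r u r 0 * v r 0.
Proof. by rewrite /dot mxE; apply: eq_bigr => r _; rewrite mxE. Qed.

Lemma dotC p (u v : 'cV[R]_p) : dot u v = dot v u.
Proof. by rewrite !dotE; apply: eq_bigr => r _; rewrite mulrC. Qed.

Lemma dotDl p (u w v : 'cV[R]_p) : dot (u + w) v = dot u v + dot w v.
Proof. by rewrite !dotE -big_split; apply: eq_bigr => r _; rewrite mxE mulrDl. Qed.

Lemma dotDr p (u w v : 'cV[R]_p) : dot v (u + w) = dot v u + dot v w.
Proof. by rewrite dotC dotDl !(dotC v). Qed.

Lemma dotZl p c (u v : 'cV[R]_p) : dot (c *: u) v = c * dot u v.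
Proof. by rewrite !dotE mulr_sumr; apply: eq_bigr => r _; rewrite mxE mulrA. Qed.

Lemma dotZr p c (u v : 'cV[R]_p) : dot v (c *: u) = c * dot v u.
Proof. by rewrite dotC dotZl dotC. Qed.

Lemma dotNl p (u v : 'cV[R]_p) : dot (- u) v = - dot u v.
Proof. by rewrite -scaleN1r dotZl mulN1r. Qed.

Lemma dotNr p (u v : 'cV[R]_p) : dot v (- u) = - dot v u.
Proof. by rewrite dotC dotNl dotC. Qed.

Lemma dotBl p (u w v : 'cV[R]_p) : dot (u - w) v = dot u v - dot w v.
Proof. by rewrite dotDl dotNl. Qed.

Lemma dotBr p (u w v : 'cV[R]_p) : dot v (u - w) = dot v u - dot v w.
Proof. by rewrite dotDr dotNr. Qed.

Lemma dot_sumr p (I : Type) (r : seq I) (Pr : pred I) (F : I -> 'cV[R]_p) v :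
  dot v (\sum_(i <- r | Pr i) F i) = \sum_(i <- r | Pr i) dot v (F i).
Proof.
elim: r => [|i r IH]; first by rewrite !big_nil dotE big1 // => k _; rewrite mxE mulr0.
by rewrite !big_cons; case: (Pr i); rewrite ?dotDr IH.
Qed.

Lemma dot_mulmx p q (M : 'M[R]_(p, q)) (u : 'cV[R]_q) (v : 'cV[R]_p) :
  dot (M *m u) v = dot u (M^T *m v).
Proof. by rewrite /dot trmx_mul mulmxA. Qed.

Lemma dot_ge0 p (u : 'cV[R]_p) : 0 <= dot u u.
Proof. by rewrite dotE; apply: sumr_ge0 => r _; rewrite -expr2 sqr_ge0. Qed.

Lemma qformE n (M : 'M[R]_n) v : qform M v = dot v (M *m v).
Proof. by rewrite /qform /dot mulmxA. Qed.

Lemma nrm_ge0 p q (M : 'M[R]_(p, q)) : 0 <= nrm M.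
Proof. by apply: sumr_ge0 => i _; apply: sumr_ge0 => j _. Qed.

Lemma nrm_entry p q (M : 'M[R]_(p, q)) i j : `|M i j| <= nrm M.
Proof.
rewrite /nrm (bigD1 i) //= (bigD1 j) //= -addrA lerDl.
apply: addr_ge0; first by apply: sumr_ge0.
by apply: sumr_ge0 => k _; apply: sumr_ge0.
Qed.

Lemma nrmD p q (M N : 'M[R]_(p, q)) : nrm (M + N) <= nrm M + nrm N.
Proof.
rewrite /nrm -big_split ler_sum // => i _; rewrite -big_split ler_sum // => j _.
by rewrite mxE ler_normD.
Qed.

Lemma nrmZ p q c (M : 'M[R]_(p, q)) : nrm (c *: M) = `|c| * nrm M.
Proof.
rewrite /nrm mulr_sumr; apply: eq_bigr => i _; rewrite mulr_sumr.
by apply: eq_bigr => j _; rewrite mxE normrM.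
Qed.

Lemma nrmN p q (M : 'M[R]_(p, q)) : nrm (- M) = nrm M.
Proof. by rewrite -scaleN1r nrmZ normrN1 mul1r. Qed.

Lemma nrmB p q (M N : 'M[R]_(p, q)) : nrm (M - N) <= nrm M + nrm N.
Proof. by rewrite -(nrmN N) nrmD. Qed.

Lemma nrmBC p q (M N : 'M[R]_(p, q)) : nrm (M - N) = nrm (N - M).
Proof. by rewrite -nrmN opprB. Qed.

Lemma nrm0 p q : nrm (0 : 'M[R]_(p, q)) = 0.
Proof. by rewrite /nrm big1 // => i _; rewrite big1 // => j _; rewrite mxE normr0. Qed.

Lemma nrm_sum p q (I : Type) (r : seq I) (Pr : pred I) (F : I -> 'M[R]_(p, q)) :
  nrm (\sum_(i <- r | Pr i) F i) <= \sum_(i <- r | Pr i) nrm (F i).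
Proof.
elim: r => [|i r IH]; first by rewrite !big_nil nrm0.
rewrite !big_cons; case: (Pr i) => //.
by apply: le_trans (nrmD _ _) _; rewrite lerD2l.
Qed.

Lemma nrm_mul p q s (M : 'M[R]_(p, q)) (N : 'M[R]_(q, s)) : nrm (M *m N) <= nrm M * nrm N.
Proof.
rewrite /nrm mulr_suml; apply: ler_sum => i _.
apply: (@le_trans _ _ (\sum_j \sum_k `|M i k| * `|N k j|)).
  apply: ler_sum => j _; rewrite mxE; apply: le_trans (ler_norm_sum _ _ _) _.
  by apply: ler_sum => k _; rewrite normrM.
rewrite exchange_big /= mulr_suml; apply: ler_sum => k _.
rewrite -mulr_sumr ler_wpM2l //.
rewrite (bigD1 k) //= lerDl sumr_ge0 // => k' _; apply: sumr_ge0 => j _ //.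
Qed.

Lemma dot_le p (u v : 'cV[R]_p) : `|dot u v| <= nrm u * nrm v.
Proof.
have := nrm_mul u^T v; move/(le_trans (nrm_entry _ 0 0)).
suff -> : nrm u^T = nrm u by [].
by rewrite /nrm exchange_big; apply: eq_bigr => i _; apply: eq_bigr => j _; rewrite mxE.
Qed.

Definition rdv p (u : R -> 'cV[R]_p) t (u' : 'cV[R]_p) :=
  forall r, rd (fun s => u s r 0) t (u' r 0).
Definition ctv p (u : R -> 'cV[R]_p) t := forall r, {for t, continuous (fun s => u s r 0)}.

Lemma rdv_hrd p (u : R -> 'cV[R]_p) t v : has_right_deriv u t v -> rdv u t v.
Proof.
move=> H r; rewrite /rd /has_right_deriv.
have := (cvg_comp _ _ H (@coord_continuous _ _ _ r 0 v)).
by apply: cvg_trans; apply: near_eq_cvg; near=> h => /=; rewrite !mxE.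
Unshelve. all: by end_near.
Qed.

Lemma ctv_cont p (u : R -> 'cV[R]_p) t : {for t, continuous u} -> ctv u t.
Proof. move=> H r; exact: (cvg_comp _ _ H (@coord_continuous _ _ _ r 0 (u t))). Qed.

Lemma cont_cst (c t : R) : {for t, continuous (fun=> c)}.
Proof. exact: cvg_cst. Qed.

Lemma contD (f g : R -> R) t : {for t, continuous f} -> {for t, continuous g} ->
  {for t, continuous (fun s => f s + g s)}.
Proof. by move=> Hf Hg; apply: cvgD. Qed.

Lemma contM (f g : R -> R) t : {for t, continuous f} -> {for t, continuous g} ->
  {for t, continuous (fun s => f s * g s)}.
Proof. by move=> Hf Hg; apply: cvgM. Qed.

Lemma cont_sum (I : Type) (r : seq I) (Pr : pred I) (F : I -> R -> R) t :
  (forall i, Pr i -> {for t, continuous (F i)}) ->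
  {for t, continuous (fun s => \sum_(i <- r | Pr i) F i s)}.
Proof.
move=> H; elim: r => [|i r IH].
  have -> : (fun s => \sum_(i <- [::] | Pr i) F i s) = fun=> 0.
    by apply/funext => s; rewrite big_nil.
  exact: cont_cst.
have -> : (fun s => \sum_(j <- i :: r | Pr j) F j s) =
   (fun s => (if Pr i then F i s else 0) + \sum_(j <- r | Pr j) F j s).
  by apply/funext => s; rewrite big_cons; case: (Pr i); rewrite ?add0r.
apply: contD => //; case Pi: (Pr i); [exact: H | exact: cont_cst].
Qed.

Lemma ctv_lin p q (M : 'M[R]_(q, p)) (u : R -> 'cV[R]_p) t :
  ctv u t -> ctv (fun s => M *m u s) t.
Proof.
move=> H r; have -> : (fun s => (M *m u s) r 0) = (fun s => \sum_k M r k * u s k 0).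
  by apply/funext => s; rewrite mxE.
by apply: cont_sum => k _; apply: contM; [exact: cont_cst | exact: H].
Qed.

Lemma ctvD p (u w : R -> 'cV[R]_p) t : ctv u t -> ctv w t -> ctv (fun s => u s + w s) t.
Proof.
move=> Hu Hw r; have -> : (fun s => (u s + w s) r 0) = (fun s => u s r 0 + w s r 0).
  by apply/funext => s; rewrite mxE.
exact: contD.
Qed.

Lemma ctvZ p c (u : R -> 'cV[R]_p) t : ctv u t -> ctv (fun s => c *: u s) t.
Proof.
move=> Hu r; have -> : (fun s => (c *: u s) r 0) = (fun s => c * u s r 0).
  by apply/funext => s; rewrite mxE.
by apply: contM => //; exact: cont_cst.
Qed.

Lemma ctvN p (u : R -> 'cV[R]_p) t : ctv u t -> ctv (fun s => - u s) t.
Proof.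
move=> H; have -> : (fun s => - u s) = (fun s => (-1) *: u s).
  by apply/funext => s; rewrite scaleN1r.
exact: ctvZ.
Qed.

Lemma ctvB p (u w : R -> 'cV[R]_p) t : ctv u t -> ctv w t -> ctv (fun s => u s - w s) t.
Proof. by move=> Hu /ctvN Hw; exact: ctvD. Qed.

Lemma ctv_sum p (I : Type) (r : seq I) (Pr : pred I) (F : I -> R -> 'cV[R]_p) t :
  (forall i, Pr i -> ctv (F i) t) -> ctv (fun s => \sum_(i <- r | Pr i) F i s) t.
Proof.
move=> H k; have -> : (fun s => (\sum_(i <- r | Pr i) F i s) k 0) =
   (fun s => \sum_(i <- r | Pr i) F i s k 0).
  by apply/funext => s; rewrite summxE.
by apply: cont_sum => i Pi; exact: H.
Qed.

Lemma cont_dot p (u w : R -> 'cV[R]_p) t : ctv u t -> ctv w t ->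
  {for t, continuous (fun s => dot (u s) (w s))}.
Proof.
move=> Hu Hw; have -> : (fun s => dot (u s) (w s)) = (fun s => \sum_r u s r 0 * w s r 0).
  by apply/funext => s; rewrite dotE.
by apply: cont_sum => r _; apply: contM.
Qed.

Lemma rdv_lin p q (M : 'M[R]_(q, p)) (u : R -> 'cV[R]_p) t u' :
  rdv u t u' -> rdv (fun s => M *m u s) t (M *m u').
Proof.
move=> H r; have -> : (fun s => (M *m u s) r 0) = (fun s => \sum_k M r k * u s k 0).
  by apply/funext => s; rewrite mxE.
rewrite mxE; apply: rd_sum => k _; exact: rdZ.
Qed.

Lemma rdvD p (u w : R -> 'cV[R]_p) t u' w' : rdv u t u' -> rdv w t w' ->
  rdv (fun s => u s + w s) t (u' + w').
Proof.
move=> Hu Hw r; have -> : (fun s => (u s + w s) r 0) = (fun s => u s r 0 + w s r 0).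
  by apply/funext => s; rewrite mxE.
rewrite mxE; exact: rdD.
Qed.

Lemma rdvZ p c (u : R -> 'cV[R]_p) t u' : rdv u t u' -> rdv (fun s => c *: u s) t (c *: u').
Proof.
move=> Hu r; have -> : (fun s => (c *: u s) r 0) = (fun s => c * u s r 0).
  by apply/funext => s; rewrite mxE.
rewrite mxE; exact: rdZ.
Qed.

Lemma rdvN p (u : R -> 'cV[R]_p) t u' : rdv u t u' -> rdv (fun s => - u s) t (- u').
Proof.
move=> H; have -> : (fun s => - u s) = (fun s => (-1) *: u s).
  by apply/funext => s; rewrite scaleN1r.
have -> : - u' = (-1) *: u' by rewrite scaleN1r.
exact: rdvZ.
Qed.

Lemma rdvB p (u w : R -> 'cV[R]_p) t u' w' : rdv u t u' -> rdv w t w' ->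
  rdv (fun s => u s - w s) t (u' - w').
Proof. by move=> Hu /rdvN Hw; exact: rdvD. Qed.

Lemma rdv_sum p (I : Type) (r : seq I) (Pr : pred I) (F : I -> R -> 'cV[R]_p) (V : I -> 'cV[R]_p) t :
  (forall i, Pr i -> rdv (F i) t (V i)) ->
  rdv (fun s => \sum_(i <- r | Pr i) F i s) t (\sum_(i <- r | Pr i) V i).
Proof.
move=> H k; have -> : (fun s => (\sum_(i <- r | Pr i) F i s) k 0) =
   (fun s => \sum_(i <- r | Pr i) F i s k 0).
  by apply/funext => s; rewrite summxE.
by rewrite summxE; apply: rd_sum => i Pi; exact: H.
Qed.

Lemma rd_dot p (u w : R -> 'cV[R]_p) t u' w' : rdv u t u' -> rdv w t w' ->
  rd (fun s => dot (u s) (w s)) t (dot u' (w t) + dot (u t) w').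
Proof.
move=> Hu Hw; have -> : (fun s => dot (u s) (w s)) = (fun s => \sum_r u s r 0 * w s r 0).
  by apply/funext => s; rewrite dotE.
rewrite !dotE -big_split; apply: rd_sum => r _ /=; exact: rdM.
Qed.

End Vec.

Section Real2.
Variable R : realType.
Implicit Types (f g h : R -> R).

Lemma contN f t : {for t, continuous f} -> {for t, continuous (fun s => - f s)}.
Proof. by move=> H; apply: cvgN. Qed.

Lemma mvi_lo f a b M : a <= b ->
  (forall t, a < t <= b -> {for t, continuous f}) ->
  (forall t, a <= t < b -> exists2 v, rd f t v & M <= v) ->
  M * (b - a) <= f b - f a.
Proof.
move=> hab Hc Hd.
have := @mvi _ (fun s => - f s) a b (- M) hab.
have H1 : forall t, a < t <= b -> {for t, continuous (fun s => - f s)}.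
  by move=> t ht; apply: contN; exact: Hc.
have H2 : forall t, a <= t < b -> exists2 v, rd (fun s => - f s) t v & v <= - M.
  move=> t ht; have [v Hv Mv] := Hd t ht; exists (- v); first exact: rdN.
  by rewrite lerN2.
move=> /(_ H1 H2); lra.
Qed.

Lemma mvi_abs f h a b L : a <= b ->
  (forall t, a < t <= b -> {for t, continuous f}) ->
  (forall t, a <= t < b -> rd f t (h t) /\ `|h t| <= L) ->
  `|f b - f a| <= L * (b - a).
Proof.
move=> hab Hc Hd; rewrite ler_norml; apply/andP; split.
  have := @mvi_lo f a b (- L) hab Hc; rewrite mulNr; apply.
  move=> t ht; have [H1 H2] := Hd t ht; exists (h t) => //.
  by move: H2; rewrite ler_norml => /andP[].
apply: mvi => // t ht; have [H1 H2] := Hd t ht; exists (h t) => //.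
by move: H2; rewrite ler_norml => /andP[].
Qed.

Lemma lip_between f h a b L u w :
  (forall t, a < t <= b -> {for t, continuous f}) ->
  (forall t, a <= t < b -> rd f t (h t) /\ `|h t| <= L) ->
  a <= u <= b -> a <= w <= b -> `|f u - f w| <= L * `|u - w|.
Proof.
move=> Hc Hd /andP[au ub] /andP[aw wb].
have gen : forall u w, a <= u -> u <= w -> w <= b -> `|f w - f u| <= L * (w - u).
  move=> u' w' au' uw' wb'; apply: mvi_abs => //.
    by move=> t /andP[h1 h2]; apply: Hc; rewrite (le_lt_trans au' h1) (le_trans h2 wb').
  by move=> t /andP[h1 h2]; apply: Hd; rewrite (le_trans au' h1) (lt_le_trans h2 wb').
have [uw|wu] := leP u w.
  rewrite distrC (ler0_norm (x := u - w)) ?subr_le0 // opprB; exact: gen.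
rewrite (gtr0_norm (x := u - w)) ?subr_gt0 //; apply: gen => //; exact: ltW.
Qed.

Lemma sq_le (z b : R) : 0 <= b -> z ^+ 2 <= b ^+ 2 -> `|z| <= b.
Proof. by move=> b0 h; rewrite ler_norml; apply/andP; split; nra. Qed.

Lemma sum_abs_le (N : nat) (G : 'I_N -> R) C : (forall i, `|G i| <= C) ->
  `|\sum_(i < N) G i| <= N%:R * C.
Proof.
move=> H; apply: le_trans (ler_norm_sum _ _ _) _.
have -> : N%:R * C = \sum_(i < N) C by rewrite sumr_const card_ord mulr_natl.
by apply: ler_sum => i _; exact: H.
Qed.

Lemma landau g h h2 a0 d L eta : 0 <= a0 -> 0 < d ->
  (forall u, a0 < u <= a0 + d -> {for u, continuous g} /\ {for u, continuous h}) ->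
  (forall u, a0 <= u < a0 + d -> [/\ rd g u (h u), rd h u (h2 u) & `|h2 u| <= L]) ->
  (forall u, a0 <= u <= a0 + d -> `|g u| <= eta) ->
  forall t, t = a0 \/ t = a0 + d -> `|h t| <= 2 * eta / d + L * d.
Proof.
move=> a00 d0 Hc Hd Hg t ht.
have tin : a0 <= t <= a0 + d by case: ht => ->; rewrite ?lexx ?lerDl ?ltW //= ?andbT ?lerDl ltW.
have Hlip : forall u, a0 <= u <= a0 + d -> `|h u - h t| <= L * d.
  move=> u uin.
  have := @lip_between h h2 a0 (a0 + d) L u t.
  move=> /(_ (fun t ht => (Hc t ht).2)) /(_ (fun t ht => let: And3 _ b c := Hd t ht in conj b c)).
  move=> /(_ uin tin) H; apply: le_trans H _.
  have L0 : 0 <= L by have [_ _ h3] := Hd a0 ltac:(by rewrite lexx ltrDl d0); exact: le_trans h3.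
  apply: ler_wpM2l => //; move: uin tin; rewrite ler_norml => /andP[? ?] /andP[? ?].
  apply/andP; split; lra.
have Hup : g (a0 + d) - g a0 <= (h t + L * d) * (a0 + d - a0).
  apply: mvi; first by rewrite lerDl ltW.
    by move=> u hu; exact: (Hc u hu).1.
  move=> u /andP[hh1 hh2]; have [r1 _ _] := Hd u ltac:(by rewrite hh1 hh2).
  exists (h u) => //.
  have := Hlip u ltac:(by rewrite hh1 ltW); rewrite ler_norml => /andP[_]; lra.
have Hlo : (h t - L * d) * (a0 + d - a0) <= g (a0 + d) - g a0.
  apply: mvi_lo; first by rewrite lerDl ltW.
    by move=> u hu; exact: (Hc u hu).1.
  move=> u /andP[hh1 hh2]; have [r1 _ _] := Hd u ltac:(by rewrite hh1 hh2).
  exists (h u) => //.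
  have := Hlip u ltac:(by rewrite hh1 ltW); rewrite ler_norml => /andP[]; lra.
have g1 := Hg a0 ltac:(by rewrite lexx lerDl ltW).
have g2 := Hg (a0 + d) ltac:(by rewrite lexx lerDl ltW).
move: g1 g2; rewrite !ler_norml => /andP[g1 g1'] /andP[g2 g2'].
have e : (2 * eta / d + L * d) * d = 2 * eta + L * d * d.
  by rewrite mulrDl mulfVK ?gt_eqF.
apply/andP; split.
  move: Hlo Hup e; rewrite addrAC subrr add0r => Hlo Hup e; nra.
move: Hlo Hup e; rewrite addrAC subrr add0r => Hlo Hup e; nra.
Qed.

End Real2.

Lemma small2 (R : realType) (u v : R) : 0 < u -> 0 < v -> exists2 d, 0 < d & d <= u /\ d <= v.
Proof.
move=> u0 v0; exists (Num.min u v); first by rewrite lt_min u0 v0.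
by rewrite !ge_min !lexx /= ?orbT.
Qed.

Lemma beta_bound (R : realType) (N : nat) (eps : R) : (2 <= N)%N -> 0 < eps -> 0 < N%:R :> R ->
 (N.-1)%:R * (eps / (2 * N%:R)) * 2 <= eps.
Proof.
move=> hN eps0 N0.
have hN1 : N = N.-1.+1 by rewrite prednK //; lia.
have -> : (N.-1)%:R = (N%:R - 1 : R) by rewrite {2}hN1 -natr1 addrK.
have -> : (N%:R - 1) * (eps / (2 * N%:R)) * 2 = eps - eps / N%:R.
  by field; rewrite gt_eqF.
by rewrite lerBlDr lerDl divr_ge0 // ltW.
Qed.

Section Main.
Variables (R : realType) (N n m Q : nat) (a : 'I_Q -> 'M[R]_N) (sigma : R -> 'I_Q)
  (Tmin T phi : R) (A : 'M[R]_n) (B : 'M[R]_(n, m)) (P : 'M[R]_n)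
  (x : 'I_N -> R -> 'cV[R]_n).
Hypotheses (Ha : forall k, undirected_weights (a k))
  (HP : sym_posdef P) (HS : neg_semidef (A^T *m P + P *m A)) (Hphi : 0 < phi)
  (Hx : network_solution A B (B^T *m P) phi a sigma x).

Local Notation K := (B^T *m P).

Definition F (k : 'I_Q) (y : 'I_N -> 'cV[R]_n) (i : 'I_N) : 'cV[R]_n :=
  A *m y i + phi *: (B *m K *m \sum_(j < N) a k i j *: (y j - y i)).
Definition X t := fun l => x l t.
Definition f i t := F (sigma t) (X t) i.

Lemma dx i t : 0 <= t -> rdv (x i) t (f i t).
Proof. by move=> t0; apply: rdv_hrd; have [_ H] := Hx i; exact: H. Qed.

Lemma cx i t : 0 < t -> ctv (x i) t.
Proof. by move=> t0; apply: ctv_cont; have [H _] := Hx i; exact: H. Qed.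

Lemma rdF k (y : 'I_N -> R -> 'cV[R]_n) y' t :
  (forall l, rdv (y l) t (y' l)) -> forall i,
  rdv (fun s => F k (fun l => y l s) i) t (F k y' i).
Proof.
move=> H i; rewrite /F; apply: rdvD; first exact: rdv_lin.
apply: rdvZ; apply: rdv_lin; apply: rdv_sum => j _; apply: rdvZ; exact: rdvB.
Qed.

Lemma ctF k (y : 'I_N -> R -> 'cV[R]_n) t :
  (forall l, ctv (y l) t) -> forall i, ctv (fun s => F k (fun l => y l s) i) t.
Proof.
move=> H i; rewrite /F; apply: ctvD; first exact: ctv_lin.
apply: ctvZ; apply: ctv_lin; apply: ctv_sum => j _; apply: ctvZ; exact: ctvB.
Qed.

Lemma a_ge0 k i j : 0 <= a k i j.
Proof. by have [_ [H _]] := Ha k. Qed.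

Lemma a_sym k i j : a k i j = a k j i.
Proof. by have [H _] := Ha k. Qed.

Definition amax := \sum_(k < Q) \sum_(i < N) \sum_(j < N) a k i j.

Lemma amax_ge0 : 0 <= amax.
Proof. by do 3 (apply: sumr_ge0 => ? _); exact: a_ge0. Qed.

Lemma a_le_amax k i j : a k i j <= amax.
Proof.
rewrite /amax (bigD1 k) //= (bigD1 i) //= (bigD1 j) //= -!addrA lerDl.
have h1 : 0 <= \sum_(j0 < N | j0 != j) a k i j0 by apply: sumr_ge0 => *; exact: a_ge0.
have h2 : 0 <= \sum_(i0 < N | i0 != i) \sum_(j0 < N) a k i0 j0.
  by apply: sumr_ge0 => *; apply: sumr_ge0 => *; exact: a_ge0.
have h3 : 0 <= \sum_(k0 < Q | k0 != k) \sum_(i0 < N) \sum_(j0 < N) a k0 i0 j0.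
  by apply: sumr_ge0 => *; apply: sumr_ge0 => *; apply: sumr_ge0 => *; exact: a_ge0.
by rewrite !addr_ge0.
Qed.

Lemma rowsum_le k i : \sum_(j < N) a k i j <= amax.
Proof.
rewrite /amax (bigD1 k) //= [X in _ <= X + _](bigD1 i) //= -addrA lerDl.
have h2 : 0 <= \sum_(i0 < N | i0 != i) \sum_(j0 < N) a k i0 j0.
  by apply: sumr_ge0 => *; apply: sumr_ge0 => *; exact: a_ge0.
have h3 : 0 <= \sum_(k0 < Q | k0 != k) \sum_(i0 < N) \sum_(j0 < N) a k0 i0 j0.
  by apply: sumr_ge0 => *; apply: sumr_ge0 => *; apply: sumr_ge0 => *; exact: a_ge0.
by rewrite addr_ge0.
Qed.

Definition CF := nrm A + phi * nrm (B *m K) * (amax * 2).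

Lemma CF_ge0 : 0 <= CF.
Proof.
apply: addr_ge0; first exact: nrm_ge0.
apply: mulr_ge0; [apply: mulr_ge0; [exact: ltW|exact: nrm_ge0] | apply: mulr_ge0; [exact: amax_ge0|by []]].
Qed.

Lemma nrm_coupling k (y : 'I_N -> 'cV[R]_n) i C :
  (forall l, nrm (y l - y i) <= C) ->
  nrm (\sum_(j < N) a k i j *: (y j - y i)) <= amax * C.
Proof.
move=> H; apply: le_trans (nrm_sum _ _ _) _.
apply: (@le_trans _ _ (\sum_(j < N) a k i j * C)).
  apply: ler_sum => j _; rewrite nrmZ ger0_norm ?a_ge0 //.
  by apply: ler_wpM2l; [exact: a_ge0 | exact: H].
have C0 : 0 <= C by apply: le_trans (H i); exact: nrm_ge0.
by rewrite -mulr_suml ler_wpM2r // rowsum_le.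
Qed.

Lemma nrmF k (y : 'I_N -> 'cV[R]_n) C : (forall l, nrm (y l) <= C) ->
  forall i, nrm (F k y i) <= CF * C.
Proof.
move=> H i; rewrite /F /CF mulrDl.
have C0 : 0 <= C by apply: le_trans (H i); exact: nrm_ge0.
have h1 : nrm (A *m y i) <= nrm A * C.
  apply: le_trans (nrm_mul _ _) _; apply: ler_wpM2l; [exact: nrm_ge0 | exact: H].
have h2 : nrm (\sum_(j < N) a k i j *: (y j - y i)) <= amax * 2 * C.
  rewrite -mulrA; apply: nrm_coupling => l.
  apply: le_trans (nrmB _ _) _; rewrite mulr2n mulrDl mul1r; exact: lerD.
have h3 : nrm (phi *: (B *m K *m \sum_(j < N) a k i j *: (y j - y i))) <=
   phi * nrm (B *m K) * (amax * 2) * C.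
  rewrite nrmZ (ger0_norm (ltW Hphi)) -!mulrA; apply: ler_wpM2l; first exact: ltW.
  apply: le_trans (nrm_mul _ _) _; apply: ler_wpM2l; [exact: nrm_ge0 | by rewrite mulrA].
by apply: le_trans (nrmD _ _) _; exact: lerD.
Qed.

Lemma P_sym : P^T = P.
Proof. by case: HP. Qed.

Lemma key_alg (v w : 'cV[R]_n) :
  2 * dot v (P *m (A *m v + phi *: (B *m K *m w))) =
  qform (A^T *m P + P *m A) v + 2 * phi * dot (K *m v) (K *m w).
Proof.
rewrite qformE mulmxDl mulmxDr !dotDr -scalemxAr dotZr.
have e1 : dot v (A^T *m P *m v) = dot v (P *m (A *m v)).
  by rewrite -mulmxA -dot_mulmx dotC dot_mulmx P_sym.
have e1' : dot v (P *m A *m v) = dot v (P *m (A *m v)) by rewrite mulmxA.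
have e2 : dot v (P *m (B *m K *m w)) = dot (K *m v) (K *m w).
  by rewrite dot_mulmx trmx_mul trmxK P_sym !mulmxA.
rewrite e1 e1' e2; ring.
Qed.

Lemma graph_id k (y : 'I_N -> 'cV[R]_m) :
  2 * \sum_(i < N) dot (y i) (\sum_(j < N) a k i j *: (y j - y i)) =
  - \sum_(i < N) \sum_(j < N) a k i j * dot (y i - y j) (y i - y j).
Proof.
have E1 : \sum_(i < N) dot (y i) (\sum_(j < N) a k i j *: (y j - y i)) =
          \sum_(i < N) \sum_(j < N) a k i j * dot (y i) (y j - y i).
  by apply: eq_bigr => i _; rewrite dot_sumr; apply: eq_bigr => j _; rewrite dotZr.
have E2 : \sum_(i < N) \sum_(j < N) a k i j * dot (y i) (y j - y i) =
          \sum_(i < N) \sum_(j < N) a k i j * dot (y j) (y i - y j).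
  rewrite exchange_big /=; apply: eq_bigr => i _; apply: eq_bigr => j _.
  by rewrite a_sym.
rewrite E1 mulr2n mulrDl mul1r {2}E2 -big_split -sumrN /=; apply: eq_bigr => i _.
rewrite -big_split -sumrN; apply: eq_bigr => j _ /=.
rewrite !dotBl !dotBr (dotC (y j) (y i)); ring.
Qed.

Definition U t := \sum_(i < N) qform P (x i t).
Definition Wk k t := \sum_(i < N) \sum_(j < N)
  a k i j * dot (K *m (x i t - x j t)) (K *m (x i t - x j t)).

Lemma Wk_ge0 k t : 0 <= Wk k t.
Proof. by do 2 (apply: sumr_ge0 => ? _); rewrite mulr_ge0 ?a_ge0 ?dot_ge0. Qed.

Lemma qform_ge0 v : 0 <= qform P v.
Proof.
have [->|v0] := eqVneq v 0; last by apply: ltW; case: HP => _; exact.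
by rewrite /qform mulmx0 mxE.
Qed.

Lemma U_ge0 t : 0 <= U t.
Proof. by apply: sumr_ge0 => i _; exact: qform_ge0. Qed.

Lemma rd_qform (y : R -> 'cV[R]_n) t y' : rdv y t y' ->
  rd (fun s => qform P (y s)) t (2 * dot (y t) (P *m y')).
Proof.
move=> H; have -> : (fun s => qform P (y s)) = (fun s => dot (y s) (P *m y s)).
  by apply/funext => s; rewrite qformE.
have := rd_dot H (rdv_lin (M:=P) H); congr rd.
by rewrite dotC dot_mulmx P_sym mulr2n mulrDl mul1r.
Qed.

Lemma ct_qform (y : R -> 'cV[R]_n) t : ctv y t -> {for t, continuous (fun s => qform P (y s))}.
Proof.
move=> H; have -> : (fun s => qform P (y s)) = (fun s => dot (y s) (P *m y s)).
  by apply/funext => s; rewrite qformE.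
by apply: cont_dot => //; exact: ctv_lin.
Qed.

Lemma rdU t : 0 <= t -> exists2 v, rd U t v & v <= - phi * Wk (sigma t) t.
Proof.
move=> t0; eexists.
  by apply: rd_sum => i _; apply: rd_qform; exact: dx.
rewrite /f /F.
under eq_bigr do rewrite key_alg.
rewrite big_split /=.
set s1 := \sum_(i < N) _.
have s10 : s1 <= 0 by apply: sumr_le0 => i _; exact: HS.
have -> : \sum_(i < N) 2 * phi * dot (K *m X t i)
    (K *m \sum_(j < N) a (sigma t) i j *: (X t j - X t i)) =
  phi * (2 * \sum_(i < N) dot (K *m x i t)
    (\sum_(j < N) a (sigma t) i j *: (K *m x j t - K *m x i t))).
  rewrite mulr_sumr mulr_sumr; apply: eq_bigr => i _; rewrite mulrA (mulrC phi).
  congr (_ * dot _ _); rewrite mulmx_sumr; apply: eq_bigr => j _.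
  by rewrite -scalemxAr mulmxBr.
rewrite graph_id /Wk.
have -> : \sum_(i < N) \sum_(j < N) a (sigma t) i j *
    dot (K *m x i t - K *m x j t) (K *m x i t - K *m x j t) =
  \sum_(i < N) \sum_(j < N) a (sigma t) i j *
    dot (K *m (x i t - x j t)) (K *m (x i t - x j t)).
  by apply: eq_bigr => i _; apply: eq_bigr => j _; rewrite mulmxBr.
move: s10; lra.
Qed.

Lemma ctU t : 0 < t -> {for t, continuous U}.
Proof.
move=> t0; rewrite /U; apply: cont_sum => i _; apply: ct_qform; exact: cx.
Qed.

Lemma U_noninc s t : 0 <= s -> s <= t -> U t <= U s.
Proof.
move=> s0 st; have := @mvi _ U s t 0 st.
rewrite mul0r subr_le0; apply.
  by move=> u /andP[su _]; apply: ctU; exact: le_lt_trans su.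
move=> u /andP[su _]; have u0 : 0 <= u by exact: le_trans su.
have [v Hv vle] := rdU u0; exists v => //; apply: le_trans vle _.
by rewrite mulNr oppr_le0; apply: mulr_ge0; [exact: ltW | exact: Wk_ge0].
Qed.


Hypothesis Hsw : dwell_switching sigma Tmin.

Lemma P_unit : P \in unitmx.
Proof.
rewrite unitmxE unitfE; apply/negP => /det0P [v v0 vP].
have w0 : v^T != 0 by rewrite trmx_eq0.
have : 0 < qform P v^T by case: HP => _; apply.
by rewrite /qform trmxK vP mul0mx mxE ltxx.
Qed.

Lemma dot_delta r (u : 'cV[R]_n) : dot (delta_mx r 0) u = u r 0.
Proof.
rewrite dotE (bigD1 r) //= big1 => [|k kr]; first by rewrite !mxE !eqxx mul1r addr0.
by rewrite !mxE (negbTE kr) mul0r.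
Qed.

Lemma Prr_pos r : 0 < P r r.
Proof.
set e : 'cV[R]_n := delta_mx r 0.
have e0 : e != 0.
  apply/negP => /eqP /matrixP /(_ r 0); rewrite !mxE !eqxx /= => /eqP.
  by rewrite oner_eq0.
have Prr : P r r = qform P e by rewrite qformE dot_delta -colE mxE.
by rewrite Prr; case: HP => _; apply.
Qed.

Lemma CS r v : ((P *m v) r 0) ^+ 2 <= P r r * qform P v.
Proof.
set e : 'cV[R]_n := delta_mx r 0.
have e0 : e != 0.
  apply/negP => /eqP /matrixP /(_ r 0); rewrite !mxE !eqxx /= => /eqP.
  by rewrite oner_eq0.
have Prr : P r r = qform P e by rewrite qformE dot_delta -colE mxE.
have Prr0 : 0 < P r r by rewrite Prr; case: HP => _; apply.
set z := (P *m v) r 0.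
have expand s : qform P (s *: e + v) = s ^+ 2 * P r r + 2 * s * z + qform P v.
  rewrite !qformE mulmxDr -scalemxAr !dotDl !dotDr !dotZl !dotZr.
  have h1 : dot e (P *m v) = z by rewrite dot_delta.
  have h2 : dot v (P *m e) = z by rewrite dotC dot_mulmx P_sym h1.
  rewrite h1 h2 -!qformE -Prr; ring.
have := qform_ge0 ((- z / P r r) *: e + v); rewrite expand.
have hs : (- z / P r r) * P r r = - z by rewrite mulfVK ?gt_eqF.
move: hs; set s := - z / P r r => hs H.
have q0 := qform_ge0 v.
nra.
Qed.

Definition pmax := \sum_(r < n) `|P r r|.
Definition Pinv := invmx P.

Lemma nrm_of_q b eta v : 0 <= b -> pmax * eta <= b ^+ 2 -> qform P v <= eta ->
  nrm v <= nrm Pinv * (n%:R * b).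
Proof.
move=> b0 hb hq.
have hz : forall r, `|(P *m v) r 0| <= b.
  move=> r; apply: sq_le => //; apply: le_trans (CS r v) _.
  apply: le_trans hb.
  have q0 := qform_ge0 v.
  have : P r r <= pmax.
    apply: le_trans (ler_norm _) _; rewrite /pmax (bigD1 r) //= lerDl.
    by apply: sumr_ge0 => *.
  have Prr0 : 0 <= P r r by apply: ltW; exact: Prr_pos.
  move=> hp; apply: le_trans (ler_wpM2l Prr0 hq) _; apply: ler_wpM2r => //.
  by apply: le_trans q0 hq.
have -> : v = Pinv *m (P *m v) by rewrite mulKmx // P_unit.
apply: le_trans (nrm_mul _ _) _; apply: ler_wpM2l; first exact: nrm_ge0.
rewrite /nrm; have -> : n%:R * b = \sum_(r < n) b by rewrite sumr_const card_ord mulr_natl.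
apply: ler_sum => r _; rewrite big_ord1; exact: hz.
Qed.


Lemma pmax_ge0 : 0 <= pmax.
Proof. by apply: sumr_ge0 => *. Qed.

Definition Cx := nrm Pinv * (n%:R * (1 + pmax * U 0)).

Lemma x_bnd i t : 0 <= t -> nrm (x i t) <= Cx.
Proof.
move=> t0; have U00 := U_ge0 0; have p0 := pmax_ge0.
apply: (@nrm_of_q _ (U 0)).
- by rewrite addr_ge0 // mulr_ge0.
- by nra.
- apply: (le_trans _ (U_noninc (lexx 0) t0)).
  rewrite /U (bigD1 i) //= lerDl; apply: sumr_ge0 => *; exact: qform_ge0.
Qed.

Lemma Cx_ge0 : 0 <= Cx.
Proof.
have U00 := U_ge0 0; have p0 := pmax_ge0.
by rewrite /Cx mulr_ge0 ?nrm_ge0 // mulr_ge0 // addr_ge0 // mulr_ge0.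
Qed.

Definition Cf := CF * Cx.

Lemma f_bnd i t : 0 <= t -> nrm (f i t) <= Cf.
Proof. by move=> t0; apply: nrmF => l; exact: x_bnd. Qed.

Lemma f2_bnd k i t : 0 <= t -> nrm (F k (fun l => f l t) i) <= CF * Cf.
Proof. by move=> t0; apply: nrmF => l; exact: f_bnd. Qed.

Lemma Tmin_pos : 0 < Tmin.
Proof. by case: Hsw. Qed.

Lemma pick_int t d : 0 <= t -> 0 < d -> 2 * d <= Tmin ->
  exists a0, [/\ 0 <= a0, t - d <= a0 <= t, (t = a0 \/ t = a0 + d) &
    forall u, a0 <= u <= a0 + d -> sigma u = sigma t].
Proof.
move=> t0 d0 dT; case: Hsw => Tm0 [s [s0 [sinc sconst]]].
have sge : forall k, k%:R * Tmin <= s k.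
  elim => [|k IH]; first by rewrite mul0r s0.
  by rewrite -natr1 mulrDl mul1r; apply: le_trans (sinc k); rewrite lerD2r.
have ex : forall p, t < s p -> exists k, s k <= t < s k.+1.
  elim => [|p IH]; first by rewrite s0 => h; move: t0; rewrite leNgt h.
  move=> h; have [sp|ps] := leP (s p) t; first by exists p; rewrite sp h.
  exact: IH.
have [k /andP[hk1 hk2]] : exists k, s k <= t < s k.+1.
  apply: (ex (Num.Def.archi_bound (t / Tmin))).
  have := archi_boundP (divr_ge0 t0 (ltW Tm0)).
  set p := Num.Def.archi_bound _ => hp.
  apply: lt_le_trans (sge p); by rewrite -ltr_pdivrMr.
have sk0 : 0 <= s k by apply: le_trans (sge k); rewrite mulr_ge0 // ltW.
have st : sigma t = sigma (s k) by apply: sconst; rewrite hk1 hk2.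
have [h|h] := ltP (t + d) (s k.+1).
  exists t; split; [by [] | by apply/andP; split; move: d0; lra | by left | ].
  move=> u /andP[u1 u2]; rewrite st; apply: sconst.
  by rewrite (le_trans hk1 u1) (le_lt_trans u2 h).
have hsk := sinc k.
exists (t - d); split.
- by move: hsk h dT sk0; lra.
- by apply/andP; split; move: d0; lra.
- by right; rewrite subrK.
- move=> u /andP[u1 u2]; rewrite st; apply: sconst.
  rewrite subrK in u2; rewrite (le_lt_trans u2 hk2) andbT.
  by move: hsk h dT u1; lra.
Qed.

Definition Wd k t := \sum_(i < N) \sum_(j < N) a k i j *
  (dot (K *m (f i t - f j t)) (K *m (x i t - x j t)) +
   dot (K *m (x i t - x j t)) (K *m (f i t - f j t))).

Lemma rdW k t : 0 <= t -> rd (Wk k) t (Wd k t).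
Proof.
move=> t0; apply: rd_sum => i _; apply: rd_sum => j _; apply: rdZ.
have Hd := rdv_lin (M := K) (rdvB (dx (i:=i) t0) (dx (i:=j) t0)).
exact: (rd_dot Hd Hd).
Qed.

Lemma ctW k t : 0 < t -> {for t, continuous (Wk k)}.
Proof.
move=> t0; apply: cont_sum => i _; apply: cont_sum => j _; apply: contM.
  exact: cont_cst.
have Hd := ctv_lin (M := K) (ctvB (cx (i:=i) t0) (cx (i:=j) t0)).
exact: (cont_dot Hd Hd).
Qed.

Lemma nrmK_bnd (w : 'cV[R]_n) C : nrm w <= C -> nrm (K *m w) <= nrm K * C.
Proof. by move=> h; apply: le_trans (nrm_mul _ _) _; apply: ler_wpM2l => //; exact: nrm_ge0. Qed.

Definition LW := N%:R * (N%:R * (amax * (2 * ((nrm K * (Cf + Cf)) * (nrm K * (Cx + Cx)))))).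

Lemma diff_bnd (g : 'I_N -> 'cV[R]_n) C i j : (forall l, nrm (g l) <= C) -> nrm (g i - g j) <= C + C.
Proof. by move=> H; apply: le_trans (nrmB _ _) _; apply: lerD. Qed.

Lemma dotK_bnd (u v : 'cV[R]_n) Cu Cv : nrm u <= Cu -> nrm v <= Cv ->
  `|dot (K *m u) (K *m v)| <= (nrm K * Cu) * (nrm K * Cv).
Proof.
move=> hu hv; apply: le_trans (dot_le _ _) _.
have h1 := nrmK_bnd hu; have h2 := nrmK_bnd hv.
apply: ler_pM => //; exact: nrm_ge0.
Qed.

Lemma Wd_bnd k t : 0 <= t -> `|Wd k t| <= LW.
Proof.
move=> t0; apply: sum_abs_le => i; apply: sum_abs_le => j.
rewrite normrM ger0_norm ?a_ge0 //; apply: ler_pM.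
- exact: a_ge0.
- by [].
- exact: a_le_amax.
have hf := diff_bnd i j (fun l => f_bnd l t0).
have hx := diff_bnd i j (fun l => x_bnd l t0).
apply: le_trans (ler_normD _ _) _; rewrite mulr2n mulrDl mul1r; apply: lerD.
  exact: dotK_bnd.
by rewrite mulrC; exact: dotK_bnd.
Qed.


Lemma LW_ge0 : 0 <= LW.
Proof. exact: le_trans (normr_ge0 _) (Wd_bnd (sigma 0) (lexx 0)). Qed.

Lemma Wk_lip k a0 d u w : 0 <= a0 -> 0 < d ->
  a0 <= u <= a0 + d -> a0 <= w <= a0 + d ->
  `|Wk k u - Wk k w| <= LW * `|u - w|.
Proof.
move=> a00 d0 hu hw; apply: (lip_between (a := a0) (b := a0 + d)) => //.
  by move=> t /andP[h1 _]; apply: ctW; exact: le_lt_trans h1.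
move=> t /andP[h1 _]; have t0 : 0 <= t by exact: le_trans h1.
by split; [exact: rdW | exact: Wd_bnd].
Qed.

Lemma claim0 e : 0 < e -> exists T0, 0 <= T0 /\ forall t, T0 <= t -> Wk (sigma t) t <= e.
Proof.
move=> e0.
case: (pselect (exists T0, 0 <= T0 /\ forall t, T0 <= t -> Wk (sigma t) t <= e)) => // Hn.
exfalso.
have Hbad : forall T0, 0 <= T0 -> exists t, T0 <= t /\ e < Wk (sigma t) t.
  move=> T0 T00; apply: contrapT => H; apply: Hn; exists T0; split => // t tT.
  by rewrite leNgt; apply/negP => He; apply: H; exists t; split.
have LW0 := LW_ge0.
have Tm0 := Tmin_pos.
have h1 : 0 < Tmin / 2 by rewrite divr_gt0.
have h2 : 0 < e / (2 * (LW + 1)) by rewrite divr_gt0 // mulr_gt0 // ltr_wpDl.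
have [d d0 [dT dL]] := small2 h1 h2.
have d2T : 2 * d <= Tmin by move: dT; lra.
have LWd : LW * d <= e / 2.
  have : (LW + 1) * d <= (LW + 1) * (e / (2 * (LW + 1))) by rewrite ler_wpM2l // addr_ge0.
  have -> : (LW + 1) * (e / (2 * (LW + 1))) = e / 2.
    by field; rewrite gt_eqF // ltr_wpDl.
  by move: d0; nra.
pose D := phi * (e / 2) * d.
have D0 : 0 < D by rewrite /D !mulr_gt0.
have step : forall p : nat, exists t, 0 <= t /\ U t <= U 0 - p%:R * D.
  elim => [|p [tp [tp0 Htp]]]; first by exists 0; rewrite mul0r subr0 lexx.
  have tpd : 0 <= tp + d by rewrite addr_ge0 // ltW.
  have [t' [t'1 t'2]] := Hbad (tp + d) tpd.
  have t'0 : 0 <= t' := le_trans tpd t'1.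
  have [a0 [a00 /andP[ha1 ha2] ht' hsig]] := pick_int t'0 d0 d2T.
  set k := sigma t'.
  have tin : a0 <= t' <= a0 + d.
    by case: ht' => ->; apply/andP; split; move: d0; lra.
  have Wlow : forall u, a0 <= u <= a0 + d -> e / 2 <= Wk k u.
    move=> u hu; have := Wk_lip k a00 d0 hu tin.
    have hud : `|u - t'| <= d.
      by rewrite ler_norml; move: hu tin => /andP[? ?] /andP[? ?]; apply/andP; split; lra.
    rewrite ler_norml => /andP[hw _].
    have : LW * `|u - t'| <= LW * d by rewrite ler_wpM2l.
    by move: t'2 LWd hw; rewrite -/k; lra.
  have drop : U (a0 + d) - U a0 <= (- phi * (e / 2)) * (a0 + d - a0).
    apply: mvi; first by rewrite lerDl ltW.
      by move=> u /andP[hu _]; apply: ctU; exact: le_lt_trans hu.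
    move=> u /andP[hu1 hu2]; have u0 : 0 <= u by exact: le_trans hu1.
    have [v Hv vle] := rdU u0; exists v => //; apply: le_trans vle _.
    rewrite hsig; last by rewrite hu1 ltW.
    rewrite !mulNr lerN2; apply: ler_wpM2l; first exact: ltW.
    by apply: Wlow; rewrite hu1 ltW.
  have tpa : tp <= a0 by move: t'1 ha1 d0; lra.
  have Ua := U_noninc tp0 tpa.
  exists (a0 + d); split; first by rewrite addr_ge0 // ltW.
  rewrite -natr1 mulrDl mul1r; move: drop Ua Htp; rewrite /D.
  have -> : a0 + d - a0 = d by ring.
  lra.
have U00 := U_ge0 0.
have [p hp] : exists p : nat, U 0 < p%:R * D.
  exists (Num.Def.archi_bound (U 0 / D)).
  have := archi_boundP (divr_ge0 U00 (ltW D0)).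
  by rewrite ltr_pdivrMr.
have [t [t0 Ht]] := step p.
have := U_ge0 t; lra.
Qed.


Lemma min_pos (Ty : eqType) (s : seq Ty) (w : Ty -> R) :
  exists2 c, 0 < c & forall z, z \in s -> 0 < w z -> c <= w z.
Proof.
elim: s => [|z s [c c0 Hc]]; first by exists 1 => //.
have [wz|wz] := boolP (0 < w z).
  exists (Num.min c (w z)); first by rewrite lt_min c0 wz.
  move=> z'; rewrite in_cons => /orP[/eqP ->|zs] wz'.
    by rewrite ge_min lexx orbT.
  by rewrite ge_min (Hc z' zs wz').
exists c => // z'; rewrite in_cons => /orP[/eqP ->|zs] wz'; last exact: Hc.
by move: wz; rewrite wz'.
Qed.

Lemma amin_ex : exists2 am, 0 < am & forall k i j, 0 < a k i j -> am <= a k i j.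
Proof.
have [c c0 Hc] := min_pos (enum [set: ('I_Q * 'I_N * 'I_N)%type])
   (fun z => a z.1.1 z.1.2 z.2).
exists c => // k i j hk; apply: (Hc ((k, i), j)) => //; by rewrite mem_enum in_setT.
Qed.

Lemma dot_entry (v : 'cV[R]_m) r : (v r 0) ^+ 2 <= dot v v.
Proof.
rewrite dotE (bigD1 r) //= expr2 lerDl; apply: sumr_ge0 => k _.
by rewrite -expr2 sqr_ge0.
Qed.

Lemma Wk_term k t i j : a k i j * dot (K *m (x i t - x j t)) (K *m (x i t - x j t)) <= Wk k t.
Proof.
rewrite /Wk (bigD1 i) //= (bigD1 j) //= -addrA lerDl.
apply: addr_ge0; first by apply: sumr_ge0 => *; rewrite mulr_ge0 ?a_ge0 ?dot_ge0.
by apply: sumr_ge0 => *; apply: sumr_ge0 => *; rewrite mulr_ge0 ?a_ge0 ?dot_ge0.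
Qed.

Lemma claim_e0 e : 0 < e -> exists T0, 0 <= T0 /\ forall t, T0 <= t ->
  forall i j, 0 < a (sigma t) i j -> forall r, `|(K *m (x i t - x j t)) r 0| <= e.
Proof.
move=> e0; have [am am0 Ham] := amin_ex.
have [T0 [T00 HT]] := claim0 (mulr_gt0 am0 (mulr_gt0 e0 e0)).
exists T0; split => // t tT i j hij r; apply: sq_le; first exact: ltW.
have h1 := Wk_term (sigma t) t i j; have h2 := HT t tT.
have h3 := dot_entry (K *m (x i t - x j t)) r.
have h4 := Ham _ _ _ hij.
have h5 := dot_ge0 (K *m (x i t - x j t)).
move: h1 h2 h3 h4 h5; set D := dot _ _; set z := (_ r 0) => h1 h2 h3 h4 h5.
rewrite expr2; nra.
Qed.

Lemma nrm_entries p q (M : 'M[R]_(p, q)) b : (forall i j, `|M i j| <= b) ->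
  nrm M <= (p * q)%:R * b.
Proof.
move=> H; have -> : (p * q)%:R * b = \sum_(i < p) \sum_(j < q) b.
  by rewrite !sumr_const !card_ord -mulrnA mulr_natl mulnC.
by apply: ler_sum => i _; apply: ler_sum => j _; exact: H.
Qed.


Lemma Ksum k (y : 'I_N -> 'cV[R]_n) i :
  \sum_(l < N) a k i l *: (K *m (y l - y i)) = K *m \sum_(l < N) a k i l *: (y l - y i).
Proof. by rewrite mulmx_sumr; apply: eq_bigr => l _; rewrite scalemxAr. Qed.

Lemma F_diff k (y : 'I_N -> 'cV[R]_n) p i j :
  K *m A ^+ p *m (F k y i - F k y j) =
  K *m A ^+ p.+1 *m (y i - y j) + phi *: (K *m A ^+ p *m B *m
     (\sum_(l < N) a k i l *: (K *m (y l - y i)) - \sum_(l < N) a k j l *: (K *m (y l - y j)))).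
Proof.
rewrite !Ksum /F -mulmxBr.
rewrite opprD addrACA mulmxDr -mulmxBr -scalerBr -mulmxBr.
congr (_ + _); first by rewrite exprSr -mulmxE !mulmxA.
by rewrite -scalemxAr !mulmxA.
Qed.


Lemma coup_bnd k (y : 'I_N -> 'cV[R]_n) i C : 0 <= C ->
  (forall l, 0 < a k i l -> nrm (K *m (y l - y i)) <= C) ->
  nrm (\sum_(l < N) a k i l *: (K *m (y l - y i))) <= amax * C.
Proof.
move=> C0 H; apply: le_trans (nrm_sum _ _ _) _.
apply: (@le_trans _ _ (\sum_(l < N) a k i l * C)).
  apply: ler_sum => l _; rewrite nrmZ ger0_norm ?a_ge0 //.
  have [al|al] := boolP (0 < a k i l); first by apply: ler_wpM2l; [exact: a_ge0 | exact: H].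
  have -> : a k i l = 0 by apply/eqP; rewrite eq_le a_ge0 andbT leNgt.
  by rewrite !mul0r.
by rewrite -mulr_suml ler_wpM2r // rowsum_le.
Qed.

Definition gq p i j t := K *m A ^+ p *m (x i t - x j t).

Lemma Cf_ge0 : 0 <= Cf.
Proof. by rewrite /Cf mulr_ge0 ?CF_ge0 ?Cx_ge0. Qed.

Lemma entry_le (v : 'cV[R]_m) r : `|v r 0| <= nrm v.
Proof. exact: nrm_entry. Qed.

Lemma claimP p : forall e, 0 < e -> exists T0, 0 <= T0 /\ forall t, T0 <= t ->
  forall q, (q <= p)%N -> forall i j, 0 < a (sigma t) i j -> forall r, `|gq q i j t r 0| <= e.
Proof.
elim: p => [|p IH] e e0.
  have [T0 [T00 H]] := claim_e0 e0; exists T0; split => // t tT q.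
  rewrite leqn0 => /eqP -> i j hij r.
  by rewrite /gq expr0 mulmx1; exact: H.
have [T3 [T30 H3]] := IH e e0.
set Lp := nrm (K *m A ^+ p) * (CF * Cf + CF * Cf).
have Lp0 : 0 <= Lp.
  by rewrite /Lp mulr_ge0 ?nrm_ge0 // addr_ge0 // mulr_ge0 ?CF_ge0 ?Cf_ge0.
set Cm := (m * 1)%:R : R.
set c1 := phi * nrm (K *m A ^+ p *m B) * (amax * Cm + amax * Cm).
have c10 : 0 <= c1.
  apply: mulr_ge0; first by apply: mulr_ge0; [exact: ltW | exact: nrm_ge0].
  by rewrite addr_ge0 // mulr_ge0 ?amax_ge0 // ler0n.
have Tm0 := Tmin_pos.
have hT2 : 0 < Tmin / 2 by rewrite divr_gt0.
have hL : 0 < e / (3 * (Lp + 1)) by rewrite divr_gt0 // mulr_gt0 // ltr_wpDl.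
have [d d0 [dT dL]] := small2 hT2 hL.
have d2T : 2 * d <= Tmin by move: dT; lra.
have Lpd : Lp * d <= e / 3.
  have : (Lp + 1) * d <= (Lp + 1) * (e / (3 * (Lp + 1))) by rewrite ler_wpM2l // addr_ge0.
  have -> : (Lp + 1) * (e / (3 * (Lp + 1))) = e / 3.
    by field; rewrite gt_eqF // ltr_wpDl.
  by move: d0; nra.
set eta := e * d / 6.
have eta0 : 0 < eta by rewrite /eta divr_gt0 // mulr_gt0.
have etad : 2 * eta / d = e / 3 by rewrite /eta; field; rewrite gt_eqF.
set e1 := e / (3 * (c1 + 1)).
have e10 : 0 < e1 by rewrite /e1 divr_gt0 // mulr_gt0 // ltr_wpDl.
have c1e1 : c1 * e1 <= e / 3.
  have -> : c1 * e1 = (e / 3) * (c1 / (c1 + 1)).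
    by rewrite /e1; field; rewrite gt_eqF // ltr_wpDl.
  rewrite ler_piMr ?ler_pdivrMr ?mul1r ?lerDl ?ltr_wpDl //; exact: ltW (divr_gt0 _ _).
have [T1 [T10 H1]] := IH eta eta0.
have [T2 [T20 H2]] := claim_e0 e10.
exists (T1 + T2 + d + T3); split; first by rewrite !addr_ge0 // ltW.
move=> t tT q; rewrite leq_eqVlt => /orP[/eqP -> | qp]; last first.
  apply: H3; last by [].
  by move: tT T10 T20 d0; lra.
move=> i j hij r.
have t0 : 0 <= t by move: tT T10 T20 T30 d0; lra.
have tT2 : T2 <= t by move: tT T10 T30 d0; lra.
have [a0 [a00 /andP[ha1 ha2] ht hsig]] := pick_int t0 d0 d2T.
set k := sigma t.
pose g u := gq p i j u r 0.
pose h u := (K *m A ^+ p *m (F k (X u) i - F k (X u) j)) r 0.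
pose h2 u := (K *m A ^+ p *m (F k (fun l => f l u) i - F k (fun l => f l u) j)) r 0.
have Hl : `|h t| <= 2 * eta / d + Lp * d.
  apply: (@landau _ g h h2 a0 d Lp eta a00 d0) => //.
  - move=> u /andP[hu _]; have u0 : 0 < u by exact: le_lt_trans hu.
    split.
      by apply: (ctv_lin (M := K *m A ^+ p) (ctvB (cx (i:=i) u0) (cx (i:=j) u0))).
    have Hc := fun l => cx (i:=l) u0.
    move: (ctv_lin (M := K *m A ^+ p) (ctvB (ctF (k:=k) Hc (i:=i)) (ctF (k:=k) Hc (i:=j)))); rewrite /h /X; apply.
  - move=> u /andP[hu1 hu2]; have u0 : 0 <= u by exact: le_trans hu1.
    have su : sigma u = k by apply: hsig; rewrite hu1 ltW.
    split.
    + move: (rdv_lin (M := K *m A ^+ p) (rdvB (dx (i:=i) u0) (dx (i:=j) u0))).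
      by rewrite /f su; apply.
    + have Hd := fun l => dx (i:=l) u0.
      move: (rdv_lin (M := K *m A ^+ p) (rdvB (rdF (k:=k) Hd (i:=i)) (rdF (k:=k) Hd (i:=j)))); rewrite /h /h2 /X; apply.
    + apply: le_trans (entry_le _ _) _; apply: le_trans (nrm_mul _ _) _.
      apply: ler_wpM2l; first exact: nrm_ge0.
      by apply: le_trans (nrmB _ _) _; apply: lerD; exact: f2_bnd.
  - move=> u /andP[hu1 hu2]; apply: H1 => //.
    + by move: hu1 ha1 tT T20 T30 d0; lra.
    + by rewrite hsig ?hu1.
have Hid := F_diff k (X t) p i j.
have Hft : forall l, f l t = F k (X t) l by [].
have HC : nrm (K *m A ^+ p *m B *m
     (\sum_(l < N) a k i l *: (K *m (X t l - X t i)) -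
      \sum_(l < N) a k j l *: (K *m (X t l - X t j)))) <= nrm (K *m A ^+ p *m B) * (amax * (Cm * e1) + amax * (Cm * e1)).
  apply: le_trans (nrm_mul _ _) _; apply: ler_wpM2l; first exact: nrm_ge0.
  have Ce : 0 <= Cm * e1 by rewrite mulr_ge0 ?ler0n // ltW.
  apply: le_trans (nrmB _ _) _; apply: lerD; apply: coup_bnd => // l hl.
    rewrite -opprB mulmxN nrmN; apply: nrm_entries => r' c'.
    by rewrite [c']ord1; apply: H2.
  rewrite -opprB mulmxN nrmN; apply: nrm_entries => r' c'.
  by rewrite [c']ord1; apply: H2.
have eh : h t = gq p.+1 i j t r 0 + (phi *: (K *m A ^+ p *m B *m
     (\sum_(l < N) a k i l *: (K *m (X t l - X t i)) -
      \sum_(l < N) a k j l *: (K *m (X t l - X t j))))) r 0.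
  by rewrite /h Hid mxE.
have Hce := entry_le (phi *: (K *m A ^+ p *m B *m
     (\sum_(l < N) a k i l *: (K *m (X t l - X t i)) -
      \sum_(l < N) a k j l *: (K *m (X t l - X t j))))) r.
rewrite nrmZ (ger0_norm (ltW Hphi)) in Hce.
move: Hl Hce HC; rewrite eh etad; set G1 := gq _ _ _ _ _ _; set G2 := _ r 0.
move=> Hl Hce HC.
have : phi * nrm (K *m A ^+ p *m B *m
     (\sum_(l < N) a k i l *: (K *m (X t l - X t i)) -
      \sum_(l < N) a k j l *: (K *m (X t l - X t j)))) <= c1 * e1.
  rewrite /c1 -mulrA -mulrA; apply: ler_wpM2l; first exact: ltW.
  apply: le_trans HC _; apply: ler_wpM2l; first exact: nrm_ge0.
  by rewrite mulrDl !mulrA.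
move=> Hc2.
have := ler_normB (G1 + G2) G2; rewrite addrK.
by move: Hl Hce Hc2 Lpd c1e1; lra.
Qed.


Hypothesis Hobs : observable (B^T *m P) A.

Lemma claim_obs e : 0 < e -> exists T0, 0 <= T0 /\ forall t, T0 <= t ->
  forall i j, 0 < a (sigma t) i j -> nrm (x i t - x j t) <= e.
Proof.
move=> e0.
have : row_full (obs_mx K A) by rewrite /row_full Hobs.
case/row_fullP => L HL.
set S := (\sum_(k < n) m)%N.
set c := nrm L * (S * 1)%:R.
have c0 : 0 <= c by rewrite mulr_ge0 ?nrm_ge0 ?ler0n.
set e1 := e / (c + 1).
have e10 : 0 < e1 by rewrite divr_gt0 // ltr_wpDl.
have [T0 [T00 H]] := claimP n.-1 e10.
exists T0; split => // t tT i j hij.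
set d := x i t - x j t.
have -> : d = L *m (obs_mx K A *m d) by rewrite mulmxA HL mul1mx.
apply: le_trans (nrm_mul _ _) _.
have Ho : nrm (obs_mx K A *m d) <= (S * 1)%:R * e1.
  apply: nrm_entries => q c'.
  rewrite /obs_mx mxcol_mul /mxcol mxE [c']ord1.
  apply: H => //.
  by have := ltn_ord (tagnat.sig1 q); lia.
apply: le_trans (ler_wpM2l (nrm_ge0 _) Ho) _.
rewrite mulrA -/c /e1.
have -> : c * (e / (c + 1)) = e * (c / (c + 1)) by field; rewrite gt_eqF // ltr_wpDl.
apply: ler_piMr; first exact: ltW.
by rewrite ler_pdivrMr ?ltr_wpDl // mul1r lerDl.
Qed.


Definition Cm := (m * 1)%:R : R.
Definition kappa := 2 * phi * (nrm K * (Cx + Cx)) * (amax * Cm + amax * Cm).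

Lemma kappa_ge0 : 0 <= kappa.
Proof.
rewrite /kappa; apply: mulr_ge0; last by rewrite addr_ge0 // mulr_ge0 ?amax_ge0 ?ler0n.
apply: mulr_ge0; first by rewrite mulr_ge0 // ltW.
by rewrite mulr_ge0 ?nrm_ge0 // addr_ge0 // Cx_ge0.
Qed.

Lemma fdiff_eq k u v t : sigma t = k ->
  f u t - f v t = A *m (x u t - x v t) + phi *: (B *m K *m
    (\sum_(l < N) a k u l *: (x l t - x u t) - \sum_(l < N) a k v l *: (x l t - x v t))).
Proof. by move=> st; rewrite /f /F st opprD addrACA -mulmxBr -scalerBr -mulmxBr. Qed.

Lemma claim_prop e0 : 0 < e0 -> exists T0, 0 <= T0 /\ forall t1 t2, T0 <= t1 -> t1 <= t2 ->
  forall u v, qform P (x u t2 - x v t2) <= qform P (x u t1 - x v t1) + kappa * e0 * (t2 - t1).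
Proof.
move=> e00; have [T0 [T00 H]] := claim_e0 e00.
exists T0; split => // t1 t2 h1 h12 u v.
suff : qform P (x u t2 - x v t2) - qform P (x u t1 - x v t1) <= kappa * e0 * (t2 - t1) by lra.
apply: (@mvi _ (fun s => qform P (x u s - x v s))) => //.
  move=> s /andP[hs _]; have s0 : 0 < s by move: hs h1 T00; lra.
  exact: ct_qform (ctvB (cx (i:=u) s0) (cx (i:=v) s0)).
move=> s /andP[hs1 hs2]; have s0 : 0 <= s by move: hs1 h1 T00; lra.
eexists; first exact: rd_qform (rdvB (dx (i:=u) s0) (dx (i:=v) s0)).
rewrite (fdiff_eq u v (erefl (sigma s))) key_alg.
set k := sigma s.
have hS := HS (x u s - x v s).
set D := dot _ _.
suff : 2 * phi * D <= kappa * e0 by lra.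
have hD : `|D| <= nrm K * (Cx + Cx) * (amax * (Cm * e0) + amax * (Cm * e0)).
  apply: le_trans (dot_le _ _) _; apply: ler_pM; rewrite ?nrm_ge0 //.
    apply: nrmK_bnd; exact: (diff_bnd u v (fun l => x_bnd l s0)).
  rewrite mulmxBr -!Ksum.
  have Ce : 0 <= Cm * e0 by rewrite mulr_ge0 ?ler0n // ltW.
  apply: le_trans (nrmB _ _) _; apply: lerD; apply: coup_bnd => // l hl.
    rewrite -opprB mulmxN nrmN; apply: nrm_entries => r' c'.
    by rewrite [c']ord1; apply: H => //; move: hs1 h1; lra.
  rewrite -opprB mulmxN nrmN; apply: nrm_entries => r' c'.
  by rewrite [c']ord1; apply: H => //; move: hs1 h1; lra.
have : 2 * phi * D <= 2 * phi * `|D| by rewrite ler_wpM2l ?ler_norm // mulr_ge0 // ltW.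
move=> h2; apply: le_trans h2 _.
rewrite /kappa -!mulrA; apply: ler_wpM2l => //; apply: ler_wpM2l; first exact: ltW.
apply: le_trans hD _; rewrite !mulrA -!mulrA; apply: ler_wpM2l; first exact: nrm_ge0.
apply: ler_wpM2l; first by rewrite addr_ge0 // Cx_ge0.
by rewrite !mulrA mulrDl.
Qed.


Lemma path_bound (y : 'I_N -> 'cV[R]_n) (E : 'I_N -> 'I_N -> Prop) b r i : 0 <= b ->
  (forall w z, E w z -> nrm (y w - y z) <= b) -> clos_trans _ E r i ->
  nrm (y r - y i) <= (N.-1)%:R * b.
Proof.
move=> b0 HE Hct.
pose e := [rel w z : 'I_N | `[< E w z >]].
have Hc : connect e r i.
  elim: Hct => [w z Ewz | w z u _ H1 _ H2]; last exact: connect_trans H1 H2.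
  by apply: connect1; rewrite /e /=; apply/asboolP.
case/connectP: Hc => p pth ->.
case: (shortenP pth) => p' pth' up' _.
have sz : (size p' <= N.-1)%N.
  have := @uniq_leq_size _ (r :: p') (enum 'I_N) up'.
  have hsub : {subset r :: p' <= enum 'I_N} by move=> z _; rewrite mem_enum.
  move=> /(_ hsub).
  by rewrite size_enum_ord /= => h; lia.
have gen : forall w q, path e w q -> nrm (y w - y (last w q)) <= (size q)%:R * b.
  move=> w q; elim: q w => [|z q IH] w /=; first by rewrite subrr nrm0 mul0r.
  move=> /andP[ewz pq]; have h1 : nrm (y w - y z) <= b by apply: HE; move/asboolP: ewz.
  have h2 := IH z pq.
  have -> : y w - y (last z q) = (y w - y z) + (y z - y (last z q)) by rewrite addrA subrK.
  apply: le_trans (nrmD _ _) _; rewrite -natr1 mulrDl mul1r addrC; exact: lerD.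
apply: le_trans (gen r p' pth') _; apply: ler_wpM2r => //; by rewrite ler_nat.
Qed.

Lemma mxnorm_le (v : 'cV[R]_n) : `|v| <= nrm v.
Proof.
have -> : `|v| = mx_norm v by [].
rewrite mx_normrE; apply: bigmax_le; first exact: nrm_ge0.
by move=> ij _; exact: nrm_entry.
Qed.


Hypotheses (hN : (2 <= N)%N) (HT : 0 < T)
  (Hst : forall t0 : R, 0 <= t0 -> has_spanning_tree (union_edge a sigma t0 T)).

Lemma final i j : `|x i t - x j t| @[t --> +oo] --> (0 : R).
Proof.
apply/cvgrPdist_le => eps eps0.
have N0 : 0 < N%:R :> R by rewrite ltr0n (leq_trans _ hN).
set beta := eps / (2 * N%:R).
have beta0 : 0 < beta by rewrite divr_gt0 // mulr_gt0.
set c := nrm Pinv * n%:R.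
have c0 : 0 <= c by rewrite mulr_ge0 ?nrm_ge0 ?ler0n.
set b := beta / (c + 1).
have b0 : 0 < b by rewrite divr_gt0 // ltr_wpDl.
have hb : nrm Pinv * (n%:R * b) <= beta.
  rewrite mulrA -/c /b.
  have -> : c * (beta / (c + 1)) = beta * (c / (c + 1)) by field; rewrite gt_eqF // ltr_wpDl.
  apply: ler_piMr; first exact: ltW.
  by rewrite ler_pdivrMr ?ltr_wpDl // mul1r lerDl.
have p0 := pmax_ge0.
set eta := b ^+ 2 / (pmax + 1).
have eta0 : 0 < eta by rewrite divr_gt0 ?exprn_gt0 // ltr_wpDl.
have heta : pmax * eta <= b ^+ 2.
  rewrite /eta mulrA ler_pdivrMr ?ltr_wpDl // mulrC; apply: ler_wpM2l.
    by rewrite exprn_ge0 // ltW.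
  by rewrite lerDl.
have qsmall : forall v, qform P v <= eta -> nrm v <= beta.
  by move=> v hv; apply: le_trans (nrm_of_q (ltW b0) heta hv) hb.
have nP0 := nrm_ge0 P.
have h2 : 0 < eta / (2 * (nrm P + 1)) by rewrite divr_gt0 // mulr_gt0 // ltr_wpDl.
have [e2 e20 [e21 e22]] := small2 ltr01 h2.
have qbig : forall v, nrm v <= e2 -> qform P v <= eta / 2.
  move=> v hv; rewrite qformE; apply: le_trans (ler_norm _) _.
  apply: le_trans (dot_le _ _) _.
  have hPv : nrm (P *m v) <= nrm P * e2.
    by apply: le_trans (nrm_mul _ _) _; apply: ler_wpM2l.
  have nv0 := nrm_ge0 v.
  have : (nrm P + 1) * e2 <= (nrm P + 1) * (eta / (2 * (nrm P + 1))) by rewrite ler_wpM2l // addr_ge0.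
  have -> : (nrm P + 1) * (eta / (2 * (nrm P + 1))) = eta / 2.
    by field; rewrite gt_eqF // ltr_wpDl.
  move=> h3; apply: le_trans (ler_wpM2l nv0 hPv) _.
  by move: hv e21 e20 h3 nP0; nra.
have k0 := kappa_ge0.
set e0 := eta / (2 * (kappa * T + 1)).
have e00 : 0 < e0 by rewrite divr_gt0 // mulr_gt0 // ltr_wpDl // mulr_ge0 // ltW.
have ke0 : kappa * e0 * T <= eta / 2.
  have -> : kappa * e0 * T = (eta / 2) * (kappa * T / (kappa * T + 1)).
    by rewrite /e0; field; rewrite gt_eqF // ltr_wpDl // mulr_ge0 // ltW.
  apply: ler_piMr; first by rewrite divr_ge0 // ltW.
  have kT : 0 <= kappa * T by rewrite mulr_ge0 // ltW.
  by rewrite ler_pdivrMr ?ltr_wpDl // mul1r lerDl.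
have [Ta [Ta0 HTa]] := claim_obs e20.
have [Tb [Tb0 HTb]] := claim_prop e00.
exists (Ta + Tb + T); split; first exact: num_real.
move=> t tM.
set t0 := t - T.
have t00 : 0 <= t0 by rewrite /t0; move: tM Ta0 Tb0; lra.
have [r Hr] := Hst t00.
have edge : forall w z, union_edge a sigma t0 T w z -> nrm (x w t - x z t) <= beta.
  move=> w z [tau [/andP[ht1 ht2] hpos]].
  have h1 := HTa tau ltac:(by move: ht1 Tb0; rewrite /t0; move: tM; lra) z w hpos.
  have h4 := qbig _ h1.
  have h5 := HTb tau t ltac:(by move: ht1 Ta0; rewrite /t0; move: tM; lra)
     ltac:(by move: ht2; rewrite /t0; lra) z w.
  have h6 : kappa * e0 * (t - tau) <= kappa * e0 * T.
    by apply: ler_wpM2l; [rewrite mulr_ge0 // ltW | move: ht1; rewrite /t0; lra].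
  rewrite nrmBC; apply: qsmall; by move: h4 h5 h6 ke0; lra.
have hr : forall l, nrm (x r t - x l t) <= (N.-1)%:R * beta.
  move=> l; have [->|lr] := eqVneq l r.
    by rewrite subrr nrm0 mulr_ge0 ?ler0n ?ltW.
  exact: (path_bound (y := fun l => x l t) (ltW beta0) edge (Hr l (elimN eqP lr))).
rewrite sub0r normrN normr_id; apply: le_trans (mxnorm_le _) _.
have -> : x i t - x j t = (x r t - x j t) - (x r t - x i t).
  by rewrite opprB [RHS]addrC addrA subrK.
apply: le_trans (nrmB _ _) _.
have := hr i; have := hr j.
have := beta_bound hN eps0 N0; rewrite -/beta.
lra.
Qed.

End Main.

Unset Implicit Arguments.

Theorem theorem3 (R : realType) (N n m Q : nat)
  (a : 'I_Q -> 'M[R]_N) (sigma : R -> 'I_Q) (Tmin T phi : R)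
  (A : 'M[R]_n) (B : 'M[R]_(n, m)) (P : 'M[R]_n)
  (x : 'I_N -> R -> 'cV[R]_n) :
  (2 <= N)%N -> (1 <= n)%N -> (1 <= m)%N ->
  (forall k, undirected_weights (a k)) ->
  dwell_switching sigma Tmin ->
  0 < T ->
  (forall t0 : R, 0 <= t0 -> has_spanning_tree (union_edge a sigma t0 T)) ->
  stabilizable A B ->
  sym_posdef P ->
  neg_semidef (A^T *m P + P *m A) ->
  observable (B^T *m P) A ->
  0 < phi ->
  network_solution A B (B^T *m P) phi a sigma x ->
  forall i j : 'I_N, `|x i t - x j t| @[t --> +oo] --> (0 : R).
Proof.
move=> hN hn hm Ha Hsw HT Hst Hstab HP HS Hobs Hphi Hx i j.
exact: (final Ha HP HS Hphi Hx Hsw Hobs hN HT Hst i j).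
Qed.
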